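(* Let $f(z)=\sum_{k\ge0}f_kz^k$ be holomorphic on the open unit disk, $0<r<1$, and let $N(n)$ be an increasing sequence of integers with $N(n)/n\to\infty$ such that for each $n$ there are $P_n\in\mathcal P_n$ and $Q_n\in\mathcal P_1$, $Q_n\neq0$, with $Q_nf-P_n$ having at least $N(n)$ zeros in $\overline\Delta_r$, normalized so that $Q_n(z)=\alpha_nz-1$ with $\alpha_n\in\mathbb C$ or $Q_n(z)=z$ (written $\alpha_n=\infty$). Let $\rho=1/\limsup_k|f_k|^{1/k}\ge1$ be the radius of convergence of the Taylor series of $f$ at $0$. Then $\limsup_{n\to\infty}|\alpha_n|\ge1/\rho$.
   Context: $\mathcal P_n$ is the space of complex polynomials of degree at most $n$; zeros are counted with multiplicity; $|\infty|=\infty$ and $1/\infty=0$. *)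

(* Defs.v *)
From Stdlib Require Import Reals List.
From Coquelicot Require Import Coquelicot.
Open Scope R_scope.

Definition holo_disk (g : C -> C) : Prop :=
  forall z : C, Cmod z < 1 -> @ex_derive C_AbsRing C_NormedModule g z.

Definition zero_mult_ge (g : C -> C) (z0 : C) (m : nat) : Prop :=
  exists h : C -> C, holo_disk h /\
    forall z : C, Cmod z < 1 -> g z = Cmult (pow_n (K:=C_Ring) (Cminus z z0) m) (h z).

(* g has at least N zeros (counted with multiplicity) in the closed disk
   of radius r: distinct points z_i with |z_i| <= r, multiplicities m_i,
   sum m_i >= N. (If g vanishes identically every multiplicity is allowed.) *)
Definition at_least_zeros (g : C -> C) (r : R) (N : Z) : Prop :=
  exists l : list (C * nat),
    NoDup (map fst l) /\
    (forall p, In p l -> Cmod (fst p) <= r /\ zero_mult_ge g (fst p) (snd p)) /\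
    (N <= Z.of_nat (fold_right (fun p s => (snd p + s)%nat) 0%nat l))%Z.

Definition poly_eval (c : nat -> C) (n : nat) (z : C) : C :=
  sum_n (G:=C_AbelianMonoid) (fun k => Cmult (c k) (pow_n (K:=C_Ring) z k)) n.

(* normalized Q_n : Some a  <->  Q_n(z) = a z - 1 ;  None  <->  Q_n(z) = z (alpha_n = oo) *)
Definition Q_eval (alpha : option C) (z : C) : C :=
  match alpha with Some a => Cminus (Cmult a z) (RtoC 1) | None => z end.

Definition abs_alpha (alpha : option C) : Rbar :=
  match alpha with Some a => Finite (Cmod a) | None => p_infty end.

Definition LimSupRbar (u : nat -> Rbar) : Rbar :=
  Rbar_glb (fun y => exists N : nat,
    y = Rbar_lub (fun x => exists n : nat, (N <= n)%nat /\ x = u n)).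

(* |f_k|^{1/k}  (the k = 0 term is irrelevant for the limsup) *)
Definition root_abs (fk : nat -> C) (k : nat) : R :=
  if Req_EM_T (Cmod (fk k)) 0 then 0 else Rpower (Cmod (fk k)) (/ INR k).

Definition inv_ext (x : Rbar) : Rbar :=
  match x with
  | Finite y => if Req_EM_T y 0 then p_infty else Finite (/ y)
  | p_infty => Finite 0
  | m_infty => Finite 0
  end.

Definition conv_radius (fk : nat -> C) : Rbar :=
  inv_ext (LimSup_seq (root_abs fk)).

(* Main.v *)
Require Import Defs.
From Stdlib Require Import Reals List Lra Lia Psatz FunctionalExtensionality ClassicalEpsilon.
From Coquelicot Require Import Coquelicot.
Open Scope R_scope.

Lemma pow_n_Cpow (z : C) k : pow_n (K:=C_Ring) z k = (z ^ k)%C.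
Proof. induction k; simpl; [reflexivity| rewrite IHk; reflexivity]. Qed.

Lemma Cmod_sq (z : C) : Cmod z ^ 2 = fst z ^ 2 + snd z ^ 2.
Proof. unfold Cmod. rewrite pow2_sqrt; [reflexivity|]. nra. Qed.

Lemma real_sq_split (X Y t : R) : 0 < t -> (X + Y) ^ 2 <= (1 + t) * X ^ 2 + (1 + / t) * Y ^ 2.
Proof.
  intros Ht.
  assert (H : 0 <= t * X ^ 2 + / t * Y ^ 2 - 2 * X * Y).
  { assert (E : t * X ^ 2 + / t * Y ^ 2 - 2 * X * Y = / t * (t * X - Y) ^ 2) by (field; lra).
    rewrite E. apply Rmult_le_pos. left; apply Rinv_0_lt_compat; lra. apply pow2_ge_0. }
  nra.
Qed.

Lemma Cmod_sq_split (x y : C) t : 0 < t ->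
  Cmod (x + y)%C ^ 2 <= (1 + t) * Cmod x ^ 2 + (1 + / t) * Cmod y ^ 2.
Proof.
  intros Ht. eapply Rle_trans; [|apply real_sq_split; exact Ht].
  pose proof (Cmod_triangle x y). pose proof (Cmod_ge_0 (x+y)%C).
  pose proof (Cmod_ge_0 x). pose proof (Cmod_ge_0 y). nra.
Qed.

Lemma opt_lemma (x a b : R) : 0 <= a -> 0 <= b ->
  (forall t, 0 < t -> x <= (1 + t) * a ^ 2 + (1 + / t) * b ^ 2) -> x <= (a + b) ^ 2.
Proof.
  intros Ha Hb H.
  destruct (Req_dec a 0) as [Ha0|Ha0]; [|destruct (Req_dec b 0) as [Hb0|Hb0]].
  - subst a. destruct (Rle_dec x (b^2)) as [|Hx]; [nra|].
    exfalso. assert (Hp : 0 < x - b ^ 2) by lra.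
    set (t := (b ^ 2 + 1) / (x - b ^ 2)).
    assert (Ht : 0 < t) by (unfold t; apply Rdiv_lt_0_compat; nra).
    specialize (H t Ht).
    assert (E : / t = (x - b^2) / (b^2 + 1)) by (unfold t; field; nra).
    rewrite E in H.
    assert (E2 : (1 + t) * 0 ^ 2 + (1 + (x - b ^ 2) / (b ^ 2 + 1)) * b ^ 2
       = b^2 + (x - b^2) * (b^2 / (b^2+1))) by (field; nra).
    rewrite E2 in H.
    assert (b ^ 2 / (b ^ 2 + 1) < 1).
    { apply (Rmult_lt_reg_r (b^2+1)); [nra|]. unfold Rdiv. rewrite Rmult_assoc, Rinv_l; nra. }
    nra.
  - subst b. destruct (Rle_dec x (a^2)) as [|Hx]; [nra|].
    exfalso. assert (Hp : 0 < x - a ^ 2) by lra.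
    set (t := (x - a ^ 2) / (2 * (a ^ 2 + 1))).
    assert (Ht : 0 < t) by (unfold t; apply Rdiv_lt_0_compat; nra).
    specialize (H t Ht).
    assert (E : (1 + t) * a ^ 2 + (1 + / t) * 0 ^ 2 = a^2 + (x - a^2) * (a^2 / (2 * (a^2+1)))) by (unfold t; field; nra).
    rewrite E in H.
    assert (a ^ 2 / (2*(a ^ 2 + 1)) < 1).
    { apply (Rmult_lt_reg_r (2*(a^2+1))); [nra|]. unfold Rdiv. rewrite Rmult_assoc, Rinv_l; nra. }
    nra.
  - assert (Hta : 0 < b / a) by (apply Rdiv_lt_0_compat; lra).
    specialize (H (b / a) Hta).
    assert (E : (1 + b / a) * a ^ 2 + (1 + / (b / a)) * b ^ 2 = (a + b) ^ 2) by (field; lra).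
    lra.
Qed.

Lemma le_eps (x y z : R) : 0 <= z -> (forall t, 0 < t -> x <= y + t * z) -> x <= y.
Proof.
  intros Hz H. destruct (Rle_dec x y) as [|Hn]; [lra|]. exfalso.
  destruct (Req_dec z 0) as [->|Hz0].
  - specialize (H 1 Rlt_0_1). lra.
  - specialize (H ((x - y) / (2 * z))). assert (0 < (x - y) / (2 * z)) by (apply Rdiv_lt_0_compat; lra).
    specialize (H H0). assert (E : (x - y) / (2 * z) * z = (x - y) / 2) by (field; lra). lra.
Qed.

Definition good (c : nat -> C) := forall rho, 0 <= rho < 1 -> exists M, forall k, Cmod (c k) * rho ^ k <= M.

Definition sq (rho : R) (c : nat -> C) (k : nat) : R := (Cmod (c k) * rho ^ k) ^ 2.
Definition Qn (rho : R) (c : nat -> C) : R := Series (sq rho c).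

Definition shift (X : nat -> C) (k : nat) : C := match k with O => 0%C | S j => X j end.
Definition lin (u v : C) (X : nat -> C) (k : nat) : C := (u * X k + v * shift X k)%C.

Lemma sq_nonneg rho c k : 0 <= sq rho c k.
Proof. unfold sq. apply pow2_ge_0. Qed.

Lemma good_ex_sq c rho : good c -> 0 <= rho < 1 -> ex_series (sq rho c).
Proof.
  intros Hg Hr. set (r' := (1 + rho) / 2).
  assert (Hr' : 0 < r' < 1) by (unfold r'; lra).
  destruct (Hg r' (conj (Rlt_le _ _ (proj1 Hr')) (proj2 Hr'))) as [M HM].
  assert (HM0 : 0 <= M) by (specialize (HM 0%nat); simpl in HM; pose proof (Cmod_ge_0 (c 0%nat)); lra).
  set (q := rho / r').
  assert (Hq : 0 <= q < 1).
  { unfold q. split. apply Rdiv_le_0_compat; lra. apply (Rmult_lt_reg_r r'); [lra|].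
    unfold Rdiv. rewrite Rmult_assoc, Rinv_l; unfold r'; lra. }
  apply (@ex_series_le R_AbsRing R_CompleteNormedModule _ (fun k => M ^ 2 * (q ^ 2) ^ k)).
  - intros k.
    change (norm (sq rho c k)) with (Rabs (sq rho c k)).
    rewrite Rabs_pos_eq by apply sq_nonneg. unfold sq.
    assert (E : rho ^ k = r' ^ k * q ^ k).
    { rewrite <- Rpow_mult_distr. f_equal. unfold q. field. lra. }
    rewrite E.
    assert (0 <= Cmod (c k) * (r' ^ k * q ^ k)).
    { apply Rmult_le_pos. apply Cmod_ge_0. apply Rmult_le_pos; apply pow_le; lra. }
    assert (Cmod (c k) * (r' ^ k * q ^ k) <= M * q ^ k).
    { rewrite <- Rmult_assoc. apply Rmult_le_compat_r. apply pow_le; lra. apply HM. }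
    assert (E2 : (q ^ 2) ^ k = (q ^ k) ^ 2) by (rewrite <- !pow_mult; f_equal; lia).
    rewrite E2. apply Rle_trans with ((M * q ^ k) ^ 2); [apply pow_incr; lra | right; ring].
  - eexists. apply (@is_series_scal_l R_AbsRing R_NormedModule (M^2) (fun k => (q^2)^k)).
    apply is_series_geom. rewrite Rabs_pos_eq by nra. nra.
Qed.

Lemma exR_plus (a b : nat -> R) : ex_series a -> ex_series b -> ex_series (fun n => a n + b n).
Proof. intros. exact (ex_series_plus a b H H0). Qed.
Lemma exR_scal (c : R) (a : nat -> R) : ex_series a -> ex_series (fun n => c * a n).
Proof. intros. exact (ex_series_scal_l c a H). Qed.
Lemma exR_minus (a b : nat -> R) : ex_series a -> ex_series b -> ex_series (fun n => a n - b n).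
Proof. intros. exact (ex_series_minus a b H H0). Qed.

Lemma Series_zero : Series (fun _ => 0) = 0.
Proof.
  rewrite (Series_ext _ (fun n => 0 * 0)) by (intros; ring).
  rewrite Series_scal_l. ring.
Qed.

Lemma Series_nonneg a : (forall n, 0 <= a n) -> ex_series a -> 0 <= Series a.
Proof.
  intros H He. rewrite <- Series_zero. apply Series_le; auto. intros; split; [lra|apply H].
Qed.

Lemma sum_f_nonneg a k : (forall n, 0 <= a n) -> 0 <= sum_f_R0 a k.
Proof. intros H. induction k; simpl. apply H. specialize (H (S k)). lra. Qed.

Lemma sum_f_ge_term a k : (forall n, 0 <= a n) -> a k <= sum_f_R0 a k.
Proof.
  intros H. destruct k; simpl. lra.
  pose proof (sum_f_nonneg a k H). lra.
Qed.

Lemma Series_ge_term a k : (forall n, 0 <= a n) -> ex_series a -> a k <= Series a.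
Proof.
  intros H He. rewrite (Series_incr_n a (S k)) by (lia || auto). simpl pred.
  pose proof (sum_f_ge_term a k H).
  assert (0 <= Series (fun j => a (S k + j)%nat)).
  { apply Series_nonneg. intros; apply H. apply (ex_series_incr_n a (S k)). auto. }
  lra.
Qed.

Lemma Qn_nonneg rho c : good c -> 0 <= rho < 1 -> 0 <= Qn rho c.
Proof. intros. apply Series_nonneg. apply sq_nonneg. apply good_ex_sq; auto. Qed.

Lemma sq_le_Qn rho c k : good c -> 0 <= rho < 1 -> sq rho c k <= Qn rho c.
Proof. intros. apply Series_ge_term. apply sq_nonneg. apply good_ex_sq; auto. Qed.

Lemma good_shift X : good X -> good (shift X).
Proof.
  intros H rho Hr. destruct (H rho Hr) as [M HM]. exists M. intros [|k]; simpl.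
  - rewrite Cmod_0. specialize (HM O). simpl in HM. pose proof (Cmod_ge_0 (X O)). lra.
  - specialize (HM k). pose proof (Cmod_ge_0 (X k)). pose proof (pow_le rho k (proj1 Hr)).
    assert (Cmod (X k) * (rho * rho ^ k) <= Cmod (X k) * rho ^ k) by (apply Rmult_le_compat_l; nra).
    lra.
Qed.

Lemma good_scal u X : good X -> good (fun k => (u * X k)%C).
Proof.
  intros H rho Hr. destruct (H rho Hr) as [M HM]. exists (Cmod u * M). intros k.
  rewrite Cmod_mult, Rmult_assoc. apply Rmult_le_compat_l. apply Cmod_ge_0. apply HM.
Qed.

Lemma good_plus X Y : good X -> good Y -> good (fun k => (X k + Y k)%C).
Proof.
  intros H1 H2 rho Hr. destruct (H1 rho Hr) as [M1 HM1]. destruct (H2 rho Hr) as [M2 HM2].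
  exists (M1 + M2). intros k. specialize (HM1 k). specialize (HM2 k).
  pose proof (Cmod_triangle (X k) (Y k)). pose proof (pow_le rho k (proj1 Hr)). nra.
Qed.

Lemma good_lin u v X : good X -> good (lin u v X).
Proof.
  intros H. unfold lin. apply good_plus. apply good_scal; auto. apply good_scal. apply good_shift; auto.
Qed.

Lemma Q_shift rho X : good X -> 0 <= rho < 1 -> Qn rho (shift X) = rho ^ 2 * Qn rho X.
Proof.
  intros H Hr. unfold Qn. rewrite Series_incr_1_aux.
  2: { unfold sq; simpl. rewrite Cmod_0. ring. }
  rewrite <- Series_scal_l. apply Series_ext. intros n. unfold sq; simpl. ring.
Qed.

Lemma Q_scal rho u X : Qn rho (fun k => (u * X k)%C) = Cmod u ^ 2 * Qn rho X.
Proof.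
  unfold Qn. rewrite <- Series_scal_l. apply Series_ext. intros n. unfold sq. rewrite Cmod_mult. ring.
Qed.

Lemma Q_plus rho X Y t : good X -> good Y -> 0 <= rho < 1 -> 0 < t ->
  Qn rho (fun k => (X k + Y k)%C) <= (1 + t) * Qn rho X + (1 + / t) * Qn rho Y.
Proof.
  intros HX HY Hr Ht. unfold Qn. rewrite <- !Series_scal_l, <- Series_plus.
  2,3: apply exR_scal; apply good_ex_sq; auto.
  apply Series_le.
  - intros n. split. apply sq_nonneg. unfold sq. rewrite !Rpow_mult_distr.
    pose proof (Cmod_sq_split (X n) (Y n) t Ht). pose proof (pow2_ge_0 (rho ^ n)). nra.
  - apply exR_plus; apply exR_scal; apply good_ex_sq; auto.
Qed.

Lemma Q_lin_le rho u v X : good X -> 0 <= rho < 1 ->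
  Qn rho (lin u v X) <= (Cmod u + Cmod v * rho) ^ 2 * Qn rho X.
Proof.
  intros HX Hr. pose proof (Qn_nonneg rho X HX Hr) as HQ.
  set (s := sqrt (Qn rho X)).
  assert (Hs : s ^ 2 = Qn rho X) by (unfold s; rewrite pow2_sqrt; auto).
  assert (Hs0 : 0 <= s) by apply sqrt_pos.
  replace ((Cmod u + Cmod v * rho) ^ 2 * Qn rho X) with ((Cmod u * s + Cmod v * rho * s) ^ 2)
    by (rewrite <- Hs; ring).
  apply opt_lemma.
  - apply Rmult_le_pos; [apply Cmod_ge_0|auto].
  - apply Rmult_le_pos; auto. apply Rmult_le_pos; [apply Cmod_ge_0|lra].
  - intros t Ht. unfold lin. eapply Rle_trans. apply (Q_plus _ _ _ t); auto.
    apply good_scal; auto. apply good_scal; apply good_shift; auto.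
    rewrite !Q_scal, Q_shift by auto. right. rewrite <- Hs. ring.
Qed.

Lemma Q_lin_ge rho u v X : good X -> 0 <= rho < 1 -> Cmod v * rho <= Cmod u ->
  (Cmod u - Cmod v * rho) ^ 2 * Qn rho X <= Qn rho (lin u v X).
Proof.
  intros HX Hr Hab. pose proof (Qn_nonneg rho X HX Hr) as HQ.
  pose proof (Qn_nonneg rho (lin u v X) (good_lin u v X HX) Hr) as HW.
  set (a := Cmod u) in *. set (b := Cmod v * rho) in *.
  assert (Hb0 : 0 <= b) by (unfold b; apply Rmult_le_pos; [apply Cmod_ge_0|lra]).
  assert (H : forall t, 0 < t -> a ^ 2 * Qn rho X <= (1 + t) * Qn rho (lin u v X) + (1 + / t) * (b ^ 2 * Qn rho X)).
  { intros t Ht. unfold a. rewrite <- Q_scal.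
    replace (fun k => (u * X k)%C) with (fun k => (lin u v X k + (- v) * shift X k)%C).
    2: { apply functional_extensionality. intros k. unfold lin. ring. }
    eapply Rle_trans. apply (Q_plus _ _ _ t); auto. apply good_lin; auto. apply good_scal, good_shift; auto.
    rewrite Q_scal, Q_shift, Cmod_opp by auto. unfold b. right. ring. }
  destruct (Req_dec b 0) as [Hb|Hb].
  - rewrite Hb in *. apply le_eps with (z := Qn rho (lin u v X)); auto.
    intros t Ht. specialize (H t Ht). nra.
  - destruct (Req_dec a b) as [Hab'|Hab'].
    + rewrite Hab'. replace ((b - b) ^ 2 * Qn rho X) with 0 by ring. auto.
    + assert (Hlt : b < a) by lra.
      assert (Ht : 0 < b / (a - b)) by (apply Rdiv_lt_0_compat; lra).
      specialize (H _ Ht).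
      assert (E1 : 1 + b / (a - b) = a / (a - b)) by (field; lra).
      assert (E2 : 1 + / (b / (a - b)) = a / b) by (field; lra).
      rewrite E1, E2 in H.
      assert (H' : (a - b) / a * (a ^ 2 * Qn rho X) <= (a - b) / a * (a / (a - b) * Qn rho (lin u v X) + a / b * (b ^ 2 * Qn rho X))).
      { apply Rmult_le_compat_l; auto. apply Rdiv_le_0_compat; lra. }
      assert (E3 : (a - b) / a * (a ^ 2 * Qn rho X) = a * (a - b) * Qn rho X) by (field; lra).
      assert (E4 : (a - b) / a * (a / (a - b) * Qn rho (lin u v X) + a / b * (b ^ 2 * Qn rho X)) = Qn rho (lin u v X) + b * (a - b) * Qn rho X) by (field; lra).
      rewrite E3, E4 in H'. nra.
Qed.

Lemma Q_mono r1 r2 X : good X -> 0 <= r1 -> r1 <= r2 -> r2 < 1 -> Qn r1 X <= Qn r2 X.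
Proof.
  intros HX H1 H12 H2. apply Series_le.
  - intros n. split. apply sq_nonneg. unfold sq. apply pow_incr. split.
    apply Rmult_le_pos. apply Cmod_ge_0. apply pow_le; lra.
    apply Rmult_le_compat_l. apply Cmod_ge_0. apply pow_incr; lra.
  - apply good_ex_sq; auto. lra.
Qed.

Lemma sq_iso_term R a X k :
  sq R (lin (RtoC (R ^ 2)) (- Cconj a) X) k =
  R ^ 2 * sq R (lin (- a) 1 X) k + (R ^ 2 - Cmod a ^ 2) * (R ^ 2 * sq R X k - sq R (shift X) k).
Proof.
  unfold sq, lin. rewrite !Rpow_mult_distr, !Cmod_sq.
  destruct k as [|k]; simpl shift.
  - destruct (X O) as [x1 x2]. destruct a as [a1 a2]. simpl. ring.
  - destruct (X (S k)) as [x1 x2]. destruct (X k) as [y1 y2]. destruct a as [a1 a2]. simpl. ring.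
Qed.

Lemma Q_iso R a X : good X -> 0 <= R < 1 ->
  Qn R (lin (RtoC (R ^ 2)) (- Cconj a) X) = R ^ 2 * Qn R (lin (- a) 1 X).
Proof.
  intros HX HR. unfold Qn at 1. rewrite (Series_ext _ _ (sq_iso_term R a X)).
  assert (E1 : ex_series (sq R (lin (- a) 1 X))) by (apply good_ex_sq; auto; apply good_lin; auto).
  assert (E2 : ex_series (sq R X)) by (apply good_ex_sq; auto).
  assert (E3 : ex_series (sq R (shift X))) by (apply good_ex_sq; auto; apply good_shift; auto).
  rewrite Series_plus, !Series_scal_l, Series_minus, Series_scal_l.
  - fold (Qn R X). fold (Qn R (shift X)). fold (Qn R (lin (- a) 1 X)). rewrite Q_shift by auto. ring.
  - apply exR_scal; auto.
  - auto.
  - apply exR_scal; auto.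
  - apply exR_scal. apply exR_minus; auto. apply exR_scal; auto.
Qed.

Definition P1 (A : list C) (S : nat -> C) := fold_right (fun a X => lin (- a) 1 X) S A.
Definition P2 (R : R) (A : list C) (S : nat -> C) := fold_right (fun a X => lin (RtoC (R ^ 2)) (- Cconj a) X) S A.

Lemma lin_comm u v u' v' X : lin u v (lin u' v' X) = lin u' v' (lin u v X).
Proof.
  apply functional_extensionality. intros [|k]; unfold lin; simpl; ring.
Qed.

Lemma P1_lin A u v S : P1 A (lin u v S) = lin u v (P1 A S).
Proof. induction A; simpl; [reflexivity|]. rewrite IHA, lin_comm. reflexivity. Qed.

Lemma P2_lin R A u v S : P2 R A (lin u v S) = lin u v (P2 R A S).
Proof. induction A; simpl; [reflexivity|]. rewrite IHA, lin_comm. reflexivity. Qed.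

Lemma good_P1 A S : good S -> good (P1 A S).
Proof. induction A; simpl; auto. intros; apply good_lin; auto. Qed.

Lemma good_P2 R A S : good S -> good (P2 R A S).
Proof. induction A; simpl; auto. intros; apply good_lin; auto. Qed.

Lemma P_iso R A S : good S -> 0 <= R < 1 ->
  Qn R (P2 R A S) = (R ^ 2) ^ (length A) * Qn R (P1 A S).
Proof.
  revert S. induction A as [|a A IH]; intros S HS HR; simpl.
  - ring.
  - rewrite <- P2_lin. rewrite IH by (auto; apply good_lin; auto).
    rewrite P1_lin. rewrite Q_iso by (auto; apply good_P1; auto). replace (R * (R * 1)) with (R ^ 2) by ring. ring.
Qed.

Lemma Cmod_RtoC_nonneg x : 0 <= x -> Cmod (RtoC x) = x.
Proof. intros; rewrite Cmod_R, Rabs_pos_eq; auto. Qed.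

Lemma P_ub R rho r A S : good S -> 0 <= rho < 1 -> 0 <= r -> r * rho < R ^ 2 ->
  (forall a, In a A -> Cmod a <= r) ->
  Qn rho (P1 A S) <= (((rho + r) / (R ^ 2 - r * rho)) ^ 2) ^ (length A) * Qn rho (P2 R A S).
Proof.
  intros HS Hr Hr0 HrR. revert S HS. induction A as [|a A IH]; intros S HS HA.
  - simpl; lra.
  - set (c := (rho + r) / (R ^ 2 - r * rho)) in *.
    change (P1 (a :: A) S) with (lin (- a) 1 (P1 A S)).
    set (Y := P1 A S).
    assert (HY : good Y) by (apply good_P1; auto).
    assert (Ha : Cmod a <= r) by (apply HA; left; auto).
    assert (Ha0 : 0 <= Cmod a) by apply Cmod_ge_0.
    assert (Hden : 0 < R ^ 2 - Cmod a * rho) by nra.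
    pose proof (Q_lin_le rho (- a) 1 Y HY Hr) as H1.
    rewrite Cmod_opp, Cmod_1 in H1.
    pose proof (Q_lin_ge rho (RtoC (R ^ 2)) (- Cconj a) Y HY Hr) as H2.
    rewrite Cmod_opp, Cmod_conj, Cmod_RtoC_nonneg in H2 by (apply pow2_ge_0).
    specialize (H2 ltac:(nra)).
    assert (H3 : Qn rho (lin (RtoC (R ^ 2)) (- Cconj a) Y) <= (c ^ 2) ^ length A * Qn rho (P2 R (a :: A) S)).
    { unfold Y. rewrite <- P1_lin. simpl. rewrite <- P2_lin. apply IH. apply good_lin; auto.
      intros b Hb; apply HA; right; auto. }
    assert (HQY : 0 <= Qn rho Y) by (apply Qn_nonneg; auto).
    assert (Hc : (Cmod a + 1 * rho) / (R ^ 2 - Cmod a * rho) <= c).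
    { unfold c. apply Rmult_le_compat. lra. left; apply Rinv_0_lt_compat; lra. lra.
      apply Rinv_le_contravar; nra. }
    assert (Hc0 : 0 <= (Cmod a + 1 * rho) / (R ^ 2 - Cmod a * rho)) by (apply Rdiv_le_0_compat; lra).
    assert (E : (Cmod a + 1 * rho) ^ 2 * Qn rho Y = ((Cmod a + 1 * rho) / (R ^ 2 - Cmod a * rho)) ^ 2 * ((R ^ 2 - Cmod a * rho) ^ 2 * Qn rho Y)) by (field; lra).
    eapply Rle_trans. apply H1. rewrite E.
    assert (HQ2 : 0 <= Qn rho (P2 R (a :: A) S)) by (apply Qn_nonneg; auto; apply good_P2; auto).
    assert (Hpow : 0 <= (c ^ 2) ^ length A) by (apply pow_le; apply pow2_ge_0).
    apply Rle_trans with (c ^ 2 * ((c ^ 2) ^ length A * Qn rho (P2 R (a :: A) S))).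
    + apply Rmult_le_compat. apply pow2_ge_0. apply Rmult_le_pos; [apply pow2_ge_0|auto]. apply pow_incr; lra. lra.
    + right. change (length (a :: A)) with (Datatypes.S (length A)). rewrite <- (tech_pow_Rmult _ (length A)). ring.
Qed.

Notation isC := (@is_series C_AbsRing C_NormedModule).
Notation exC := (@ex_series C_AbsRing C_NormedModule).

Definition CSer (a : nat -> C) : C := epsilon (inhabits (RtoC 0)) (fun l : C => isC a l).

Lemma CSer_correct a : exC a -> isC a (CSer a).
Proof. intros H. unfold CSer. apply (epsilon_spec (inhabits (RtoC 0)) (fun l : C => isC a l)). exact H. Qed.

Lemma isC_unique (a : nat -> C) (l1 l2 : C) : isC a l1 -> isC a l2 -> l1 = l2.
Proof.
  intros H1 H2. apply (@filterlim_locally_unique nat C_AbsRing C_NormedModule eventually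
    (Proper_StrongProper _ eventually_filter) (sum_n a)); auto.
Qed.

Lemma isC_plus (a b : nat -> C) (la lb : C) : isC a la -> isC b lb ->
  isC (fun n => (a n + b n)%C) (la + lb)%C.
Proof. intros. exact (is_series_plus a b la lb H H0). Qed.

Lemma isC_scal (c : C) (a : nat -> C) (l : C) : isC a l -> isC (fun n => (c * a n)%C) (c * l)%C.
Proof. intros. exact (@is_series_scal_l C_AbsRing C_NormedModule c a l H). Qed.

Lemma isC_ext (a b : nat -> C) (l1 l2 : C) : (forall n, a n = b n) -> l1 = l2 -> isC a l1 -> isC b l2.
Proof. intros H E H1. subst l2. exact (is_series_ext a b l1 H H1). Qed.

Lemma isC_incr1 (a : nat -> C) (l : C) : isC a l -> isC (fun k => a (S k)) (l - a O)%C.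
Proof.
  intros H. apply (@is_series_incr_1 C_AbsRing C_NormedModule a (l - a O)%C).
  change (isC a (Cplus (Cminus l (a O)) (a O))).
  replace (Cplus (Cminus l (a O)) (a O)) with l by ring. exact H.
Qed.

Lemma isC_decr1 (a : nat -> C) (l : C) : isC (fun k => a (S k)) l -> isC a (l + a O)%C.
Proof.
  intros H. apply (@is_series_decr_1 C_AbsRing C_NormedModule a (l + a O)%C).
  change (isC (fun k => a (S k)) (Cplus (Cplus l (a O)) (Copp (a O)))).
  replace (Cplus (Cplus l (a O)) (Copp (a O))) with l by ring. exact H.
Qed.


Lemma isC_norm (a : nat -> C) (b : nat -> R) l L : isC a l -> is_series b L ->
  (forall k, Cmod (a k) <= b k) -> Cmod l <= L.
Proof.
  intros Ha Hb Hab.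
  assert (Hp : forall n, Cmod (sum_n a n) <= sum_n b n).
  { induction n. rewrite !sum_O. apply Hab.
    rewrite !sum_Sn. change (plus (sum_n a n) (a (S n))) with (Cplus (sum_n a n) (a (S n))).
    eapply Rle_trans. apply Cmod_triangle.
    specialize (Hab (S n)). change (plus (sum_n b n) (b (S n))) with (sum_n b n + b (S n)). lra. }
  change (Cmod l) with (@norm C_AbsRing C_NormedModule l).
  assert (HH : Rbar_le (norm l) L).
  { apply (filterlim_le (F := eventually) (fun n => norm (sum_n a n)) (sum_n b) (norm l) L).
    - apply filter_forall. intros n. exact (Hp n).
    - apply (filterlim_comp _ _ _ (sum_n a) norm eventually (locally l)). exact Ha. apply filterlim_norm.
    - exact Hb. }
  exact HH.
Qed.

Lemma good_bound c rho : good c -> 0 < rho < 1 -> exists M, 0 <= M /\ forall k, Cmod (c k) <= M / rho ^ k.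
Proof.
  intros Hg Hr. destruct (Hg rho (conj (Rlt_le _ _ (proj1 Hr)) (proj2 Hr))) as [M HM].
  exists M. split. specialize (HM O). simpl in HM. pose proof (Cmod_ge_0 (c O)). lra.
  intros k. specialize (HM k). assert (0 < rho ^ k) by (apply pow_lt; lra).
  apply (Rmult_le_reg_r (rho ^ k)); auto. unfold Rdiv. rewrite Rmult_assoc, Rinv_l; lra.
Qed.

Lemma isR_geom_scal (M q : R) : 0 <= q < 1 -> is_series (fun k => M * q ^ k) (M / (1 - q)).
Proof.
  intros Hq. apply (@is_series_scal_l R_AbsRing R_NormedModule M (fun k => q ^ k)).
  apply is_series_geom. rewrite Rabs_pos_eq; lra.
Qed.

Definition ev (c : nat -> C) (z : C) : C := CSer (fun k => (c k * z ^ k)%C).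

Lemma dom_geom (a : nat -> C) (M q : R) : 0 <= q < 1 -> (forall k, Cmod (a k) <= M * q ^ k) ->
  exC a /\ Cmod (CSer a) <= M / (1 - q).
Proof.
  intros Hq H.
  assert (Hex : ex_series a).
  { apply (@ex_series_le C_AbsRing C_CompleteNormedModule a (fun k => M * q ^ k)).
    intros k. exact (H k). eexists. apply isR_geom_scal; auto. }
  split; auto. eapply isC_norm. apply CSer_correct; auto. apply isR_geom_scal; auto. exact H.
Qed.

Lemma ev_ex_bound c rho0 : good c -> 0 <= rho0 < 1 -> exists B, forall z, Cmod z <= rho0 ->
  exC (fun k => (c k * z ^ k)%C) /\ Cmod (ev c z) <= B.
Proof.
  intros Hg Hr. set (r' := (1 + rho0) / 2).
  destruct (good_bound c r' Hg) as [M [HM0 HM]]. unfold r'; lra.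
  set (q := rho0 / r').
  assert (Hq : 0 <= q < 1).
  { unfold q, r'. split. apply Rdiv_le_0_compat; lra. apply (Rmult_lt_reg_r ((1 + rho0) / 2)); [lra|].
    unfold Rdiv. rewrite Rmult_assoc, Rinv_l; lra. }
  exists (M / (1 - q)). intros z Hz. apply dom_geom; auto.
  intros k. rewrite Cmod_mult, Cmod_pow. specialize (HM k).
  assert (Hr'k : 0 < r' ^ k) by (apply pow_lt; unfold r'; lra).
  assert (E : M * q ^ k = M / r' ^ k * rho0 ^ k).
  { unfold q. unfold Rdiv. rewrite Rpow_mult_distr, pow_inv. field. lra. }
  rewrite E. apply Rmult_le_compat; auto. apply Cmod_ge_0. apply pow_le, Cmod_ge_0.
  apply pow_incr. split; auto. apply Cmod_ge_0.
Qed.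

Lemma ev_correct c z : good c -> Cmod z < 1 -> isC (fun k => (c k * z ^ k)%C) (ev c z).
Proof.
  intros Hg Hz. destruct (ev_ex_bound c (Cmod z) Hg) as [B HB]. split; auto; apply Cmod_ge_0.
  apply CSer_correct. apply (HB z (Rle_refl _)).
Qed.

Definition divD (c : nat -> C) (a : C) (k : nat) : C := CSer (fun i => (c (S (k + i)) * a ^ i)%C).

Lemma divD_dom c a rho' : good c -> Cmod a < rho' -> rho' < 1 ->
  exists M, 0 <= M /\ forall k, exC (fun i => (c (S (k + i)) * a ^ i)%C) /\
    Cmod (divD c a k) <= M / rho' ^ (S k) / (1 - Cmod a / rho').
Proof.
  intros Hg Ha Hr. pose proof (Cmod_ge_0 a).
  destruct (good_bound c rho' Hg) as [M [HM0 HM]]. lra.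
  exists M. split; auto. intros k.
  assert (Hq : 0 <= Cmod a / rho' < 1).
  { split. apply Rdiv_le_0_compat; lra. apply (Rmult_lt_reg_r rho'); [lra|].
    unfold Rdiv. rewrite Rmult_assoc, Rinv_l; lra. }
  apply (dom_geom _ (M / rho' ^ S k) (Cmod a / rho')); auto.
  intros i. rewrite Cmod_mult, Cmod_pow. specialize (HM (S (k + i))).
  assert (E : M / rho' ^ S k * (Cmod a / rho') ^ i = M / rho' ^ S (k + i) * Cmod a ^ i).
  { unfold Rdiv. rewrite Rpow_mult_distr, pow_inv. replace (S (k + i)) with (S k + i)%nat by lia.
    rewrite pow_add. field. split; apply pow_nonzero; lra. }
  rewrite E. apply Rmult_le_compat_r. apply pow_le; lra. auto.
Qed.

Lemma good_divD c a : good c -> Cmod a < 1 -> good (divD c a).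
Proof.
  intros Hg Ha rho Hr. pose proof (Cmod_ge_0 a).
  set (rho' := (1 + Rmax rho (Cmod a)) / 2).
  assert (H1 : Cmod a < rho') by (unfold rho'; pose proof (Rmax_r rho (Cmod a)); pose proof (Rmax_lub_lt rho (Cmod a) 1 ltac:(lra) Ha); lra).
  assert (H2 : rho < rho') by (unfold rho'; pose proof (Rmax_l rho (Cmod a)); pose proof (Rmax_lub_lt rho (Cmod a) 1 ltac:(lra) Ha); lra).
  assert (H3 : rho' < 1) by (unfold rho'; pose proof (Rmax_lub_lt rho (Cmod a) 1 ltac:(lra) Ha); lra).
  destruct (divD_dom c a rho' Hg H1 H3) as [M [HM0 HM]].
  assert (Hq : 0 < 1 - Cmod a / rho').
  { assert (Cmod a / rho' < 1). apply (Rmult_lt_reg_r rho'); [lra|].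
    unfold Rdiv. rewrite Rmult_assoc, Rinv_l; lra. lra. }
  exists (M / rho' / (1 - Cmod a / rho')). intros k.
  destruct (HM k) as [_ Hk].
  assert (Hpk : 0 < rho' ^ k) by (apply pow_lt; lra).
  assert (Hrk : rho ^ k <= rho' ^ k) by (apply pow_incr; lra).
  apply Rle_trans with (M / rho' ^ S k / (1 - Cmod a / rho') * rho' ^ k).
  - apply Rmult_le_compat; auto. apply Cmod_ge_0. apply pow_le; lra.
  - right. simpl. field. split; lra.
Qed.

Lemma divD_rec c a : good c -> Cmod a < 1 ->
  ev c a = (c O + a * divD c a O)%C /\ forall j, divD c a j = (c (S j) + a * divD c a (S j))%C.
Proof.
  intros Hg Ha. pose proof (Cmod_ge_0 a) as Ha0.
  destruct (divD_dom c a ((1 + Cmod a) / 2) Hg) as [M [_ HM]]; try lra.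
  split.
  - pose proof (isC_incr1 _ _ (ev_correct c a Hg Ha)) as H.
    pose proof (isC_scal a _ _ (CSer_correct _ (proj1 (HM O)))) as H'.
    fold (divD c a O) in H'.
    assert (E0 : forall i, (a * (c (S (0 + i)) * a ^ i))%C = (c (S i) * a ^ S i)%C).
    { intros i. simpl. ring. }
    pose proof (isC_unique _ _ _ H (isC_ext _ _ _ _ E0 eq_refl H')) as E.
    simpl in E.
    replace (ev c a) with ((ev c a - c O * 1) + c O)%C by ring. rewrite E. ring.
  - intros j. pose proof (isC_incr1 _ _ (CSer_correct _ (proj1 (HM j)))) as H.
    fold (divD c a j) in H.
    pose proof (isC_scal a _ _ (CSer_correct _ (proj1 (HM (S j))))) as H'.
    fold (divD c a (S j)) in H'.
    assert (E : forall i, (a * (c (S (S j + i)) * a ^ i))%C = (c (S (j + S i)) * a ^ S i)%C).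
    { intros i. replace (S j + i)%nat with (j + S i)%nat by lia. simpl. ring. }
    pose proof (isC_unique _ _ _ H (isC_ext _ _ _ _ E eq_refl H')) as E2.
    simpl in E2. rewrite Nat.add_0_r in E2.
    replace (divD c a j) with ((divD c a j - c (S j) * 1) + c (S j))%C by ring. rewrite E2. ring.
Qed.

Lemma isC_zero : isC (fun _ => RtoC 0) (RtoC 0).
Proof.
  unfold is_series.
  assert (E : forall n, sum_n (G := C_AbelianMonoid) (fun _ => RtoC 0) n = RtoC 0).
  { induction n. rewrite sum_O; auto. rewrite sum_Sn, IHn. change (Cplus (RtoC 0) (RtoC 0) = RtoC 0). ring. }
  apply (filterlim_ext (fun _ => RtoC 0)). intros n; rewrite E; auto.
  apply filterlim_const.
Qed.

Definition delta (x : C) (k : nat) : C := match k with O => x | S _ => RtoC 0 end.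

Lemma good_delta x : good (delta x).
Proof.
  intros rho Hr. exists (Cmod x). intros [|k]; simpl. lra. rewrite Cmod_0.
  pose proof (Cmod_ge_0 x). lra.
Qed.

Lemma isC_delta x z : isC (fun k => (delta x k * z ^ k)%C) x.
Proof.
  apply (isC_ext (fun k => (delta x k * z ^ k)%C) _ (RtoC 0 + delta x O * z ^ O)%C). intros; reflexivity. simpl; ring.
  apply isC_decr1. apply (isC_ext (fun _ => RtoC 0) _ (RtoC 0)). intros; simpl; ring. auto. apply isC_zero.
Qed.

Lemma ev_delta x z : Cmod z < 1 -> ev (delta x) z = x.
Proof. intros Hz. eapply isC_unique. apply ev_correct; auto. apply good_delta. apply isC_delta. Qed.

Lemma ev_plus X Y z : good X -> good Y -> Cmod z < 1 -> ev (fun k => (X k + Y k)%C) z = (ev X z + ev Y z)%C.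
Proof.
  intros HX HY Hz. eapply isC_unique. apply ev_correct; auto. apply good_plus; auto.
  apply (isC_ext (fun k => (X k * z ^ k + Y k * z ^ k)%C) _ (ev X z + ev Y z)%C). intros; ring. auto.
  apply isC_plus; apply ev_correct; auto.
Qed.

Lemma ev_lin u v X z : good X -> Cmod z < 1 -> ev (lin u v X) z = (u * ev X z + v * z * ev X z)%C.
Proof.
  intros HX Hz. eapply isC_unique. apply ev_correct; auto. apply good_lin; auto.
  apply (isC_ext (fun k => (u * (X k * z ^ k) + v * (shift X k * z ^ k))%C) _ (u * ev X z + v * z * ev X z)%C). intros; unfold lin; ring. auto.
  apply isC_plus. apply isC_scal. apply ev_correct; auto.
  replace (v * z * ev X z)%C with (v * (z * ev X z))%C by ring. apply isC_scal.
  apply (isC_ext (fun k => (shift X k * z ^ k)%C) _ (z * ev X z + shift X O * z ^ O)%C). intros; reflexivity. simpl; ring.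
  apply isC_decr1. apply (isC_ext (fun k => (z * (X k * z ^ k))%C) _ (z * ev X z)%C). intros; simpl; ring. auto.
  apply isC_scal. apply ev_correct; auto.
Qed.

Lemma divD_eq c a : good c -> Cmod a < 1 ->
  c = (fun k => (lin (- a) 1 (divD c a) k + delta (ev c a) k)%C).
Proof.
  intros Hg Ha. destruct (divD_rec c a Hg Ha) as [E0 ES].
  apply functional_extensionality. intros [|j]; unfold lin; simpl.
  - rewrite E0. ring.
  - rewrite (ES j). ring.
Qed.

Lemma divD_fun c a z : good c -> Cmod a < 1 -> Cmod z < 1 ->
  ev c z = ((z - a) * ev (divD c a) z + ev c a)%C.
Proof.
  intros Hg Ha Hz. pose proof (good_divD c a Hg Ha) as HD.
  transitivity (ev (fun k => (lin (- a) 1 (divD c a) k + delta (ev c a) k)%C) z).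
  { f_equal. apply divD_eq; auto. }
  rewrite ev_plus, ev_lin, ev_delta; auto. ring. apply good_lin; auto. apply good_delta.
Qed.

Lemma divD_lin c a : good c -> Cmod a < 1 -> ev c a = RtoC 0 -> c = lin (- a) 1 (divD c a).
Proof.
  intros Hg Ha H0. rewrite (divD_eq c a Hg Ha) at 1. rewrite H0.
  apply functional_extensionality. intros [|j]; simpl; ring.
Qed.

Lemma ev_lip c rho0 a : good c -> 0 <= rho0 < 1 -> Cmod a <= rho0 ->
  exists B, 0 <= B /\ forall z, Cmod z <= rho0 -> Cmod (ev c z - ev c a) <= B * Cmod (z - a).
Proof.
  intros Hg Hr Ha. assert (Ha1 : Cmod a < 1) by lra.
  destruct (ev_ex_bound (divD c a) rho0 (good_divD c a Hg Ha1) Hr) as [B HB].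
  exists (Rabs B). split. apply Rabs_pos. intros z Hz.
  rewrite (divD_fun c a z Hg Ha1) by lra.
  replace ((z - a) * ev (divD c a) z + ev c a - ev c a)%C with ((z - a) * ev (divD c a) z)%C by ring.
  rewrite Cmod_mult. destruct (HB z Hz) as [_ HBz]. pose proof (Cmod_ge_0 (z - a)).
  pose proof (Rle_abs B). pose proof (Cmod_ge_0 (ev (divD c a) z)). nra.
Qed.

Definition Zb (c : nat -> C) (a : C) (m : nat) : Prop :=
  exists d M, 0 < d /\ forall z, Cmod z < 1 -> Cmod (z - a) < d -> Cmod (ev c z) <= M * Cmod (z - a) ^ m.

Lemma Cminus_self a : (a - a)%C = RtoC 0.
Proof. ring. Qed.

Lemma Zb_root c a m : Cmod a < 1 -> Zb c a (S m) -> ev c a = RtoC 0.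
Proof.
  intros Ha [d [M [Hd H]]]. specialize (H a Ha). rewrite Cminus_self, Cmod_0 in H.
  specialize (H Hd). simpl in H. rewrite Rmult_0_l, Rmult_0_r in H.
  apply Cmod_eq_0. pose proof (Cmod_ge_0 (ev c a)). lra.
Qed.

Lemma le_eps0 (x K t0 : R) : 0 < t0 -> (forall t, 0 < t < t0 -> x <= t * K) -> x <= 0.
Proof.
  intros Ht0 H. destruct (Rle_dec x 0) as [|Hx]; [auto|exfalso].
  assert (HK : 0 < K).
  { destruct (Rle_dec K 0); [|lra]. specialize (H (t0/2) ltac:(lra)). nra. }
  set (t := Rmin (t0 / 2) (x / (2 * K))).
  assert (Ht : 0 < t) by (unfold t; apply Rmin_glb_lt; [lra| apply Rdiv_lt_0_compat; lra]).
  assert (Ht1 : t <= t0 / 2) by apply Rmin_l.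
  assert (Ht2 : t <= x / (2 * K)) by apply Rmin_r.
  specialize (H t ltac:(lra)).
  assert (t * K <= x / 2).
  { apply Rle_trans with (x / (2 * K) * K). apply Rmult_le_compat_r; lra. right; field; lra. }
  lra.
Qed.

Lemma peel c a m : good c -> Cmod a < 1 -> Zb c a (S m) -> Zb (divD c a) a m.
Proof.
  intros Hg Ha HZ. pose proof (Zb_root c a m Ha HZ) as H0.
  pose proof (good_divD c a Hg Ha) as HD.
  destruct HZ as [d [M [Hd H]]].
  set (D := divD c a) in *.
  assert (Hfz : forall z, Cmod z < 1 -> z <> a -> Cmod (z - a) < d -> Cmod (ev D z) <= M * Cmod (z - a) ^ m).
  { intros z Hz Hza Hzd. specialize (H z Hz Hzd).
    rewrite (divD_fun c a z Hg Ha Hz), H0 in H. fold D in H.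
    replace ((z - a) * ev D z + RtoC 0)%C with ((z - a) * ev D z)%C in H by ring.
    rewrite Cmod_mult in H. simpl in H.
    assert (Hp : 0 < Cmod (z - a)). { apply Cmod_gt_0. intros E. apply Hza. 
      replace z with ((z - a) + a)%C by ring. rewrite E. ring. }
    apply (Rmult_le_reg_l (Cmod (z - a))); auto. lra. }
  assert (HDa : m <> O -> ev D a = RtoC 0).
  { intros Hm. set (rho0 := (1 + Cmod a) / 2).
    pose proof (Cmod_ge_0 a).
    destruct (ev_lip D rho0 a HD) as [B [HB0 HB]]. unfold rho0; lra. unfold rho0; lra.
    apply Cmod_eq_0. apply Rle_antisym; [|apply Cmod_ge_0].
    apply (le_eps0 _ (B + Rabs M) (Rmin d (Rmin 1 ((1 - Cmod a) / 2)))).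
    { apply Rmin_glb_lt; auto. apply Rmin_glb_lt; lra. }
    intros t [Ht Ht'].
    assert (Htd : t < d) by (pose proof (Rmin_l d (Rmin 1 ((1 - Cmod a) / 2))); lra).
    assert (Ht1 : t < 1) by (pose proof (Rmin_r d (Rmin 1 ((1 - Cmod a) / 2))); pose proof (Rmin_l 1 ((1 - Cmod a) / 2)); lra).
    assert (Ht2 : t < (1 - Cmod a) / 2) by (pose proof (Rmin_r d (Rmin 1 ((1 - Cmod a) / 2))); pose proof (Rmin_r 1 ((1 - Cmod a) / 2)); lra).
    set (z := (a + RtoC t)%C).
    assert (Ez : (z - a)%C = RtoC t) by (unfold z; ring).
    assert (Hzt : Cmod (z - a) = t) by (rewrite Ez, Cmod_R, Rabs_pos_eq; lra).
    assert (Hz : Cmod z <= rho0).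
    { unfold z. eapply Rle_trans. apply Cmod_triangle. rewrite Cmod_R, Rabs_pos_eq by lra. unfold rho0; lra. }
    assert (Hza : z <> a). { intros E. rewrite E, Cminus_self, Cmod_0 in Hzt. lra. }
    specialize (Hfz z ltac:(unfold rho0 in Hz; lra) Hza ltac:(lra)).
    specialize (HB z Hz).
    rewrite Hzt in Hfz, HB.
    assert (Hpow : t ^ m <= t).
    { destruct m. congruence. simpl. pose proof (pow_le t m ltac:(lra)).
      assert (t ^ m <= 1) by (apply pow_le1 || (rewrite <- (pow1 m); apply pow_incr; lra)). nra. }
    assert (Hm1 : M * t ^ m <= Rabs M * t).
    { pose proof (Rle_abs M). pose proof (pow_le t m ltac:(lra)). pose proof (Rabs_pos M).
      apply Rle_trans with (Rabs M * t ^ m). apply Rmult_le_compat_r; auto.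
      apply Rmult_le_compat_l; auto. }
    replace (ev D a) with (ev D z - (ev D z - ev D a))%C by ring.
    eapply Rle_trans. apply Cmod_triangle. rewrite Cmod_opp. lra. }
  exists d, (Rmax M (Cmod (ev D a))). split; auto.
  intros z Hz Hzd. destruct (Classical_Prop.classic (z = a)) as [->|Hza].
  - rewrite Cminus_self, Cmod_0. destruct m.
    + simpl. rewrite Rmult_1_r. apply Rmax_r.
    + rewrite HDa by lia. rewrite Cmod_0. simpl. lra.
  - eapply Rle_trans. apply Hfz; auto. apply Rmult_le_compat_r. apply pow_le, Cmod_ge_0. apply Rmax_l.
Qed.

Lemma transfer c a b m : good c -> Cmod a < 1 -> ev c a = RtoC 0 -> b <> a -> Zb c b m -> Zb (divD c a) b m.
Proof.
  intros Hg Ha H0 Hba [d [M [Hd H]]].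
  assert (Hba' : 0 < Cmod (b - a)). { apply Cmod_gt_0. intros E. apply Hba. replace b with ((b - a) + a)%C by ring. rewrite E. ring. }
  exists (Rmin d (Cmod (b - a) / 2)), (M / (Cmod (b - a) / 2)). split.
  { apply Rmin_glb_lt; lra. }
  intros z Hz Hzd.
  assert (Hzd1 : Cmod (z - b) < d) by (pose proof (Rmin_l d (Cmod (b - a) / 2)); lra).
  assert (Hzd2 : Cmod (z - b) < Cmod (b - a) / 2) by (pose proof (Rmin_r d (Cmod (b - a) / 2)); lra).
  assert (Hza : Cmod (b - a) / 2 <= Cmod (z - a)).
  { pose proof (Cmod_triangle (z - a) (- (z - b))). rewrite Cmod_opp in H1.
    replace (z - a + - (z - b))%C with (b - a)%C in H1 by ring. lra. }
  specialize (H z Hz Hzd1).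
  rewrite (divD_fun c a z Hg Ha Hz), H0 in H.
  replace ((z - a) * ev (divD c a) z + RtoC 0)%C with ((z - a) * ev (divD c a) z)%C in H by ring.
  rewrite Cmod_mult in H.
  pose proof (Cmod_ge_0 (ev (divD c a) z)). pose proof (pow_le (Cmod (z - b)) m (Cmod_ge_0 _)).
  assert (HM : 0 <= M * Cmod (z - b) ^ m) by nra.
  assert (Hq : Cmod (ev (divD c a) z) <= M * Cmod (z - b) ^ m / (Cmod (b - a) / 2)).
  { apply (Rmult_le_reg_r (Cmod (b - a) / 2)). lra.
    replace (M * Cmod (z - b) ^ m / (Cmod (b - a) / 2) * (Cmod (b - a) / 2)) with (M * Cmod (z - b) ^ m) by (field; lra).
    nra. }
  replace (M / (Cmod (b - a) / 2) * Cmod (z - b) ^ m) with (M * Cmod (z - b) ^ m / (Cmod (b - a) / 2)) by (field; lra).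
  exact Hq.
Qed.

Lemma P1_app A B S : P1 (A ++ B) S = P1 A (P1 B S).
Proof. unfold P1. apply fold_right_app. Qed.

Lemma inner a r L : Cmod a <= r -> r < 1 -> forall m c, good c -> Zb c a m ->
  (forall p, In p L -> fst p <> a /\ Zb c (fst p) (snd p)) ->
  exists D, good D /\ c = P1 (repeat a m) D /\ forall p, In p L -> Zb D (fst p) (snd p).
Proof.
  intros Har Hr. induction m as [|m IH]; intros c Hg HZ HL.
  - exists c. split; auto. split; auto. intros p Hp. apply HL; auto.
  - assert (Ha : Cmod a < 1) by lra.
    pose proof (Zb_root c a m Ha HZ) as H0.
    destruct (IH (divD c a) (good_divD c a Hg Ha) (peel c a m Hg Ha HZ)) as [D [HD [E HDL]]].
    { intros p Hp. destruct (HL p Hp) as [Hne HZp]. split; auto. apply transfer; auto. }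
    exists D. split; auto. split; auto.
    rewrite (divD_lin c a Hg Ha H0) at 1. rewrite E. reflexivity.
Qed.

Definition msum (l : list (C * nat)) : nat := fold_right (fun p s => (snd p + s)%nat) 0%nat l.

Lemma factor r (l : list (C * nat)) : r < 1 -> forall c, NoDup (map fst l) ->
  (forall p, In p l -> Cmod (fst p) <= r /\ Zb c (fst p) (snd p)) -> good c ->
  exists A S, good S /\ c = P1 A S /\ length A = msum l /\ forall a, In a A -> Cmod a <= r.
Proof.
  intros Hr. induction l as [|[a m] l IH]; intros c Hnd Hl Hg.
  - exists nil, c. simpl. split; auto. split; auto. split; auto. intros a [].
  - simpl in Hnd. inversion Hnd as [|x y Hnin Hnd']. subst.
    destruct (Hl (a, m) (or_introl eq_refl)) as [Har HZ]. simpl in Har, HZ.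
    destruct (inner a r l Har Hr m c Hg HZ) as [D [HD [E HDl]]].
    { intros p Hp. split. intros Hpa. apply Hnin. rewrite <- Hpa. apply in_map; auto.
      apply Hl. right; auto. }
    destruct (IH D Hnd') as [A [S [HS [E2 [Hlen HA]]]]].
    { intros p Hp. split. apply Hl; right; auto. apply HDl; auto. }
    auto.
    exists (repeat a m ++ A), S. split; auto. split.
    + rewrite P1_app, <- E2. auto.
    + split. rewrite app_length, repeat_length, Hlen. reflexivity.
      intros b Hb. apply in_app_or in Hb. destruct Hb as [Hb|Hb]; auto.
      apply repeat_spec in Hb. subst; auto.
Qed.

Lemma isC_bounded (a : nat -> C) l : isC a l -> exists M, forall k, Cmod (a k) <= M.
Proof.
  intros H. destruct (filterlim_bounded (K := C_AbsRing) (V := C_NormedModule) (sum_n a)) as [M HM].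
  { exists l. exact H. }
  exists (2 * M). intros [|k].
  - specialize (HM O). rewrite sum_O in HM. change (norm (a O)) with (Cmod (a O)) in HM.
    pose proof (Cmod_ge_0 (a O)). lra.
  - pose proof (HM k) as H1. pose proof (HM (S k)) as H2. rewrite sum_Sn in H2.
    change (norm (sum_n a k)) with (Cmod (sum_n a k)) in H1.
    change (norm (plus (sum_n a k) (a (S k)))) with (Cmod (Cplus (sum_n a k) (a (S k)))) in H2.
    replace (a (S k)) with (Cplus (Cplus (sum_n a k) (a (S k))) (Copp (sum_n a k))) by ring.
    eapply Rle_trans. apply Cmod_triangle. rewrite Cmod_opp. lra.
Qed.

Lemma good_of_series (fk : nat -> C) (f : C -> C) :
  (forall z : C, Cmod z < 1 -> is_series (fun k => Cmult (fk k) (pow_n (K:=C_Ring) z k)) (f z)) -> good fk.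
Proof.
  intros H rho Hr. assert (Hz : Cmod (RtoC rho) < 1) by (rewrite Cmod_R, Rabs_pos_eq; lra).
  destruct (isC_bounded _ _ (H _ Hz)) as [M HM]. exists M. intros k.
  specialize (HM k). rewrite pow_n_Cpow, Cmod_mult, Cmod_pow, Cmod_R, Rabs_pos_eq in HM by lra. exact HM.
Qed.

Lemma ev_of_series (fk : nat -> C) (f : C -> C) z :
  (forall z : C, Cmod z < 1 -> is_series (fun k => Cmult (fk k) (pow_n (K:=C_Ring) z k)) (f z)) ->
  Cmod z < 1 -> ev fk z = f z.
Proof.
  intros H Hz. eapply isC_unique. apply ev_correct; auto. eapply good_of_series; eauto.
  apply (isC_ext (fun k => Cmult (fk k) (pow_n (K:=C_Ring) z k)) _ (f z)). intros; rewrite pow_n_Cpow; auto. auto.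
  apply H; auto.
Qed.

Lemma ev_scal u X z : good X -> Cmod z < 1 -> ev (fun k => (u * X k)%C) z = (u * ev X z)%C.
Proof.
  intros HX Hz. eapply isC_unique. apply ev_correct; auto. apply good_scal; auto.
  apply (isC_ext (fun k => (u * (X k * z ^ k))%C) _ (u * ev X z)%C). intros; ring. auto.
  apply isC_scal; apply ev_correct; auto.
Qed.

Definition pc (p : nat -> C) (n : nat) (k : nat) : C := if Nat.leb k n then p k else RtoC 0.

Lemma good_finite (X : nat -> C) n : (forall k, (n < k)%nat -> X k = RtoC 0) -> good X.
Proof.
  intros H rho Hr. exists (sum_f_R0 (fun j => Cmod (X j)) n). intros k.
  destruct (Nat.le_gt_cases k n) as [Hk|Hk].
  - assert (Cmod (X k) <= sum_f_R0 (fun j => Cmod (X j)) n).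
    { clear H. induction n. assert (k = O) by lia. subst. simpl. lra.
      destruct (Nat.eq_dec k (S n)) as [->|Hne]. simpl. pose proof (sum_f_nonneg (fun j => Cmod (X j)) n (fun j => Cmod_ge_0 _)). lra.
      simpl. pose proof (Cmod_ge_0 (X (S n))). specialize (IHn ltac:(lia)). lra. }
    pose proof (pow_le rho k (proj1 Hr)). assert (rho ^ k <= 1) by (rewrite <- (pow1 k); apply pow_incr; lra).
    pose proof (Cmod_ge_0 (X k)). nra.
  - rewrite H, Cmod_0 by lia. rewrite Rmult_0_l. apply sum_f_nonneg. intros; apply Cmod_ge_0.
Qed.

Lemma isC_finite (a : nat -> C) n : (forall k, (n < k)%nat -> a k = RtoC 0) -> isC a (sum_n a n).
Proof.
  intros H. unfold is_series.
  apply (filterlim_ext_loc (fun _ => sum_n a n)).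
  - exists n. intros m Hm. induction Hm. auto. rewrite sum_Sn, <- IHHm, H by lia.
    change (sum_n a n = Cplus (sum_n a n) (RtoC 0)). symmetry. apply Cplus_0_r.
  - apply filterlim_const.
Qed.

Lemma ev_pc p n z : Cmod z < 1 -> ev (pc p n) z = poly_eval p n z.
Proof.
  intros Hz. eapply isC_unique. apply ev_correct; auto.
  apply (good_finite _ n). intros k Hk. unfold pc. destruct (Nat.leb_spec k n); [lia|auto].
  unfold poly_eval.
  replace (sum_n (fun k => Cmult (p k) (pow_n (K:=C_Ring) z k)) n) with (sum_n (fun k => (pc p n k * z ^ k)%C) n).
  apply isC_finite. intros k Hk. unfold pc. destruct (Nat.leb_spec k n); [lia|]. ring.
  apply sum_n_ext_loc. intros k Hk. unfold pc. destruct (Nat.leb_spec k n); [|lia]. reflexivity.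
Qed.

Definition cg (fk : nat -> C) (al : C) (p : nat -> C) (n : nat) (k : nat) : C :=
  (lin (RtoC (-1)) al fk k + RtoC (-1) * pc p n k)%C.

Lemma good_cg fk al p n : good fk -> good (cg fk al p n).
Proof.
  intros H. unfold cg. apply good_plus. apply good_lin; auto. apply good_scal.
  apply (good_finite _ n). intros k Hk. unfold pc. destruct (Nat.leb_spec k n); [lia|auto].
Qed.

Lemma ev_cg (fk : nat -> C) (f : C -> C) al p n z :
  (forall z : C, Cmod z < 1 -> is_series (fun k => Cmult (fk k) (pow_n (K:=C_Ring) z k)) (f z)) ->
  Cmod z < 1 ->
  ev (cg fk al p n) z = Cminus (Cmult (Q_eval (Some al) z) (f z)) (poly_eval p n z).
Proof.
  intros H Hz. pose proof (good_of_series fk f H) as Hg.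
  assert (Hpc : good (pc p n)).
  { apply (good_finite _ n). intros k Hk. unfold pc. destruct (Nat.leb_spec k n); [lia|auto]. }
  unfold cg. rewrite ev_plus, ev_lin, ev_scal, ev_pc, (ev_of_series fk f z H Hz); auto.
  simpl. ring. apply good_lin; auto. apply good_scal; auto.
Qed.

Lemma Zb_of_zero (g : C -> C) c z0 m : good c -> (forall z, Cmod z < 1 -> ev c z = g z) -> Cmod z0 < 1 ->
  zero_mult_ge g z0 m -> Zb c z0 m.
Proof.
  intros Hgood Heq Hz0 [h [Hh Hg]].
  pose proof (ex_derive_continuous (K:=C_AbsRing) (V:=C_NormedModule) h z0 (Hh z0 Hz0)) as Hc.
  unfold continuous in Hc.
  pose proof (proj1 (filterlim_locally h (h z0)) Hc (mkposreal 1 Rlt_0_1)) as [d Hd].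
  exists d, (Cmod (h z0) + norm_factor (K:=C_AbsRing) (V:=C_NormedModule) * 1). split. apply cond_pos.
  intros z Hz Hzd.
  assert (Hb : @ball (AbsRing_UniformSpace C_AbsRing) z0 d z) by exact Hzd.
  specialize (Hd z Hb).
  pose proof (norm_compat2 (K:=C_AbsRing) (V:=C_NormedModule) (h z0) (h z) (mkposreal 1 Rlt_0_1) Hd) as Hn.
  change (norm (minus (h z) (h z0))) with (Cmod (h z - h z0)) in Hn. simpl in Hn.
  assert (Hhz : Cmod (h z) <= Cmod (h z0) + norm_factor (K:=C_AbsRing) (V:=C_NormedModule) * 1).
  { replace (h z) with (h z0 + (h z - h z0))%C by ring. eapply Rle_trans. apply Cmod_triangle. lra. }
  rewrite Heq, Hg, Cmod_mult, pow_n_Cpow, Cmod_pow by auto.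
  pose proof (pow_le (Cmod (z - z0)) m (Cmod_ge_0 _)). rewrite Rmult_comm.
  apply Rmult_le_compat_r; auto.
Qed.

Lemma factor_zeros (fk : nat -> C) (f : C -> C) al p n r Nn :
  (forall z : C, Cmod z < 1 -> is_series (fun k => Cmult (fk k) (pow_n (K:=C_Ring) z k)) (f z)) ->
  r < 1 ->
  at_least_zeros (fun z => Cminus (Cmult (Q_eval (Some al) z) (f z)) (poly_eval p n z)) r Nn ->
  exists A S, good S /\ cg fk al p n = P1 A S /\ (Nn <= Z.of_nat (length A))%Z /\ forall a, In a A -> Cmod a <= r.
Proof.
  intros H Hr [l [Hnd [Hl HN]]].
  pose proof (good_of_series fk f H) as Hg.
  destruct (factor r l Hr (cg fk al p n) Hnd) as [A [S [HS [E [Hlen HA]]]]].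
  - intros q Hq. destruct (Hl q Hq) as [Hq1 Hq2]. split; auto.
    apply (Zb_of_zero (fun z => Cminus (Cmult (Q_eval (Some al) z) (f z)) (poly_eval p n z)) _ _ _ (good_cg fk al p n Hg)). intros z Hz. apply ev_cg; auto. lra. exact Hq2.
  - apply good_cg; auto.
  - exists A, S. split; auto. split; auto. split; auto. rewrite Hlen. exact HN.
Qed.

Lemma Q_pc_deg R1 R2 p n : 0 < R1 <= R2 -> R2 < 1 ->
  Qn R2 (pc p n) <= ((R2 / R1) ^ 2) ^ n * Qn R1 (pc p n).
Proof.
  intros H1 H2. assert (Hg : good (pc p n)).
  { apply (good_finite _ n). intros k Hk. unfold pc. destruct (Nat.leb_spec k n); [lia|auto]. }
  unfold Qn. rewrite <- Series_scal_l. apply Series_le.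
  - intros k. split. apply sq_nonneg. unfold sq, pc. destruct (Nat.leb_spec k n).
    + assert (E : R2 ^ k = (R2 / R1) ^ k * R1 ^ k) by (rewrite <- Rpow_mult_distr; f_equal; field; lra).
      rewrite E. assert (Hk : ((R2 / R1) ^ k) ^ 2 <= ((R2 / R1) ^ 2) ^ n).
      { rewrite <- !pow_mult. apply Rle_pow. apply (Rmult_le_reg_r R1); [lra|]. unfold Rdiv.
        rewrite Rmult_assoc, Rinv_l; lra. lia. }
      pose proof (pow2_ge_0 (Cmod (p k) * R1 ^ k)).
      replace ((Cmod (p k) * ((R2 / R1) ^ k * R1 ^ k)) ^ 2) with (((R2 / R1) ^ k) ^ 2 * (Cmod (p k) * R1 ^ k) ^ 2) by ring.
      apply Rmult_le_compat_r; auto.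
    + rewrite Cmod_0. rewrite !Rmult_0_l. simpl. lra.
  - apply exR_scal. apply good_ex_sq; auto. lra.
Qed.

Lemma Q_plus1 rho X Y : good X -> good Y -> 0 <= rho < 1 ->
  Qn rho (fun k => (X k + Y k)%C) <= 2 * Qn rho X + 2 * Qn rho Y.
Proof.
  intros. eapply Rle_trans. apply (Q_plus rho X Y 1); auto. lra. right. field.
Qed.

Lemma Cmod_m1R : Cmod (RtoC (-1)) = 1.
Proof. rewrite Cmod_R, Rabs_left; lra. Qed.

Lemma Q_neg rho X : Qn rho (fun k => (RtoC (-1) * X k)%C) = Qn rho X.
Proof. rewrite Q_scal, Cmod_m1R. ring. Qed.

Lemma estimate (fk : nat -> C) (p : nat -> C) (n : nat) (al : C) (b r R1 R2 : R) (A : list C) (Sq : nat -> C) :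
  good fk -> 0 <= r -> 0 < R1 -> R1 <= R2 -> R2 < 1 -> r * R1 < R2 ^ 2 -> Cmod al <= b ->
  good Sq -> cg fk al p n = P1 A Sq -> (forall a, In a A -> Cmod a <= r) ->
  let q := (R1 + r) / (R2 ^ 2 - r * R1) * R2 in
  let C0 := (1 + b) ^ 2 * Qn R2 fk in
  4 * ((R2 / R1) ^ 2) ^ n * (q ^ 2) ^ (length A) <= 1 / 2 ->
  forall j, (n <= j)%nat ->
    (Cmod (fk (S j) - al * fk j) * R1 ^ (S j)) ^ 2 <= 12 * C0 * ((R2 / R1) ^ 2) ^ n * (q ^ 2) ^ (length A).
Proof.
  intros Hf Hr HR1 H12 HR2 HrR Hal HS HE HA q C0 Hsmall j Hj.
  set (g := cg fk al p n).
  set (An := lin (RtoC (-1)) al fk).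
  assert (HAn : good An) by (apply good_lin; auto).
  assert (Hpc : good (pc p n)).
  { apply (good_finite _ n). intros k Hk. unfold pc. destruct (Nat.leb_spec k n); [lia|auto]. }
  assert (Hg : good g) by (apply good_cg; auto).
  assert (HR1' : 0 <= R1 < 1) by lra. assert (HR2' : 0 <= R2 < 1) by lra.
  set (kap := ((R2 / R1) ^ 2) ^ n).
  assert (Hkap : 1 <= kap).
  { unfold kap. rewrite <- (pow1 n). apply pow_incr. split. lra.
    rewrite <- (pow1 2). apply pow_incr. split. lra. apply (Rmult_le_reg_r R1); [lra|]. unfold Rdiv.
    rewrite Rmult_assoc, Rinv_l; lra. }
  set (th := (q ^ 2) ^ length A).
  assert (Hth : 0 <= th) by (apply pow_le, pow2_ge_0).
  assert (H1 : Qn R1 g <= th * Qn R2 g).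
  { unfold g. rewrite HE. eapply Rle_trans. apply (P_ub R2 R1 r A Sq); auto.
    eapply Rle_trans. apply Rmult_le_compat_l. apply pow_le, pow2_ge_0.
    apply (Q_mono R1 R2); auto. apply good_P2; auto. lra.
    rewrite P_iso by auto. unfold th, q. rewrite <- Rmult_assoc, <- Rpow_mult_distr. right. f_equal. f_equal. ring. }
  assert (HC0 : forall rho, 0 <= rho <= R2 -> Qn rho An <= C0).
  { intros rho Hrho. unfold An. eapply Rle_trans. apply Q_lin_le; auto. lra.
    rewrite Cmod_m1R. unfold C0.
    pose proof (Cmod_ge_0 al). pose proof (Qn_nonneg rho fk Hf ltac:(lra)).
    apply Rmult_le_compat. apply pow2_ge_0. auto. apply pow_incr. split. nra. nra.
    apply Q_mono; auto; lra. }
  assert (HC0p : 0 <= C0) by (eapply Rle_trans; [apply (Qn_nonneg R1 An); auto| apply HC0; lra]).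
  assert (Eg : g = fun k => (An k + RtoC (-1) * pc p n k)%C) by reflexivity.
  assert (Epc : pc p n = fun k => (An k + RtoC (-1) * g k)%C).
  { apply functional_extensionality. intros k. rewrite Eg. ring. }
  assert (H3 : Qn R1 (pc p n) <= 2 * C0 + 2 * Qn R1 g).
  { rewrite Epc at 1. eapply Rle_trans. apply Q_plus1; auto. apply good_scal; auto.
    rewrite Q_neg. pose proof (HC0 R1 ltac:(lra)). lra. }
  assert (H4 := Q_pc_deg R1 R2 p n ltac:(lra) HR2). fold kap in H4.
  assert (H5 : Qn R2 g <= 2 * C0 + 2 * Qn R2 (pc p n)).
  { rewrite Eg at 1. eapply Rle_trans. apply Q_plus1; auto. apply good_scal; auto.
    rewrite Q_neg. pose proof (HC0 R2 ltac:(lra)). lra. }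
  assert (HX : Qn R2 g <= 12 * C0 * kap).
  { assert (Hs : 4 * kap * th <= 1 / 2) by exact Hsmall.
    assert (Qn R2 g <= 2 * C0 + 2 * kap * (2 * C0 + 2 * (th * Qn R2 g))).
    { eapply Rle_trans. apply H5. apply Rplus_le_compat_l. rewrite Rmult_assoc. apply Rmult_le_compat_l. lra.
      eapply Rle_trans. apply H4. apply Rmult_le_compat_l. lra. eapply Rle_trans. apply H3. lra. }
    pose proof (Qn_nonneg R2 g Hg HR2'). nra. }
  assert (HY : Qn R1 g <= 12 * C0 * kap * th).
  { eapply Rle_trans. apply H1. pose proof (Qn_nonneg R2 g Hg HR2'). nra. }
  assert (Hterm := sq_le_Qn R1 g (S j) Hg HR1').
  unfold sq in Hterm.
  replace (g (S j)) with (- (fk (S j) - al * fk j))%C in Hterm.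
  2: { unfold g, cg, lin, pc. simpl shift. destruct (Nat.leb_spec (S j) n). lia. ring. }
  rewrite Cmod_opp in Hterm. lra.
Qed.

Lemma pow_le_1_exp q m n : 0 <= q <= 1 -> (m <= n)%nat -> q ^ n <= q ^ m.
Proof.
  intros Hq Hmn. replace n with (m + (n - m))%nat by lia. rewrite pow_add.
  pose proof (pow_le q m (proj1 Hq)). assert (q ^ (n - m) <= 1) by (rewrite <- (pow1 (n - m)); apply pow_incr; lra).
  pose proof (pow_le q (n - m) (proj1 Hq)). nra.
Qed.

Lemma pow_small q y : 0 <= q < 1 -> 0 < y -> exists l : nat, q ^ l <= y.
Proof.
  intros Hq Hy. destruct (pow_lt_1_zero q ltac:(rewrite Rabs_pos_eq; lra) y Hy) as [N HN].
  exists N. specialize (HN N (le_n _)). pose proof (Rle_abs (q ^ N)). lra.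
Qed.

Lemma pow_big x Y : 1 < x -> exists m : nat, (1 <= m)%nat /\ Y <= x ^ m.
Proof.
  intros Hx. destruct (Rle_dec Y 1) as [HY|HY].
  - exists 1%nat. split; auto. simpl. lra.
  - destruct (pow_small (/ x) (/ Y)) as [l Hl].
    { split. left; apply Rinv_0_lt_compat; lra. rewrite <- Rinv_1. apply Rinv_lt_contravar; lra. }
    apply Rinv_0_lt_compat; lra.
    exists (S l). split. lia. rewrite pow_inv in Hl.
    assert (Hxl : 0 < x ^ l) by (apply pow_lt; lra).
    assert (Y <= x ^ l).
    { rewrite <- (Rinv_inv Y), <- (Rinv_inv (x ^ l)). apply Rinv_le_contravar. apply Rinv_0_lt_compat; auto. exact Hl. }
    simpl. nra.
Qed.

Lemma recur (fk : nat -> C) (al : C) b R1 E n : 0 <= b -> 0 < R1 -> b * R1 < 1 -> Cmod al <= b -> 0 <= E ->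
  (forall j, (n <= j)%nat -> Cmod (fk (S j) - al * fk j) * R1 ^ (S j) <= E) ->
  forall d, Cmod (fk (n + d)%nat) <= b ^ d * Cmod (fk n) + E / R1 ^ (n + d) / (1 - b * R1).
Proof.
  intros Hb HR1 HbR Hal HE H. induction d.
  - rewrite Nat.add_0_r. simpl. assert (0 <= E / R1 ^ n / (1 - b * R1)).
    { apply Rdiv_le_0_compat. apply Rdiv_le_0_compat; auto. apply pow_lt; lra. lra. }
    lra.
  - replace (n + S d)%nat with (S (n + d)) by lia.
    specialize (H (n + d)%nat ltac:(lia)).
    assert (HR : 0 < R1 ^ S (n + d)) by (apply pow_lt; lra).
    assert (H' : Cmod (fk (S (n + d)) - al * fk (n + d)%nat) <= E / R1 ^ S (n + d)).
    { apply (Rmult_le_reg_r (R1 ^ S (n + d))); auto. unfold Rdiv. rewrite Rmult_assoc, Rinv_l; lra. }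
    replace (fk (S (n + d))) with ((fk (S (n + d)) - al * fk (n + d)%nat) + al * fk (n + d)%nat)%C by ring.
    eapply Rle_trans. apply Cmod_triangle. rewrite Cmod_mult.
    pose proof (Cmod_ge_0 (fk (n + d)%nat)). pose proof (Cmod_ge_0 al).
    assert (Cmod al * Cmod (fk (n + d)%nat) <= b * (b ^ d * Cmod (fk n) + E / R1 ^ (n + d) / (1 - b * R1))).
    { apply Rmult_le_compat; auto. }
    assert (E1 : E / R1 ^ S (n + d) + b * (b ^ d * Cmod (fk n) + E / R1 ^ (n + d) / (1 - b * R1))
      = b ^ S d * Cmod (fk n) + E / R1 ^ (S (n + d)) / (1 - b * R1)).
    { simpl. assert (0 < R1 ^ (n + d)) by (apply pow_lt; lra). field. repeat split; lra. }
    lra.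
Qed.

Lemma exp_le_mono x y : x <= y -> exp x <= exp y.
Proof. intros [H|H]. left; apply exp_increasing; auto. subst; lra. Qed.

Lemma limsup_bound (fk : nat -> C) A0 b' b'' K0 : 0 < b' < b'' -> 1 <= A0 ->
  (forall k, (K0 <= k)%nat -> Cmod (fk k) <= A0 * b' ^ k) ->
  Rbar_le (LimSup_seq (root_abs fk)) b''.
Proof.
  intros Hb HA H. rewrite <- (LimSup_seq_const b''). apply LimSup_le.
  assert (Hl : 0 < ln (b'' / b')).
  { rewrite <- ln_1. apply ln_increasing. lra. apply (Rmult_lt_reg_r b'); [lra|]. unfold Rdiv.
    rewrite Rmult_assoc, Rinv_l; lra. }
  assert (HlA : 0 <= ln A0) by (rewrite <- ln_1; apply ln_le; lra).
  destruct (INR_unbounded (ln A0 / ln (b'' / b'))) as [K1 HK1].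
  exists (Nat.max K0 (Nat.max 1 K1)). intros k Hk.
  unfold root_abs. destruct (Req_EM_T (Cmod (fk k)) 0) as [|Hne]. lra.
  assert (Hk0 : (K0 <= k)%nat) by lia. assert (Hk1 : (1 <= k)%nat) by lia. assert (Hk2 : (K1 <= k)%nat) by lia.
  assert (Hkpos : 0 < INR k) by (apply lt_0_INR; lia).
  specialize (H k Hk0). pose proof (Cmod_ge_0 (fk k)).
  assert (Hpos : 0 < Cmod (fk k)) by lra.
  eapply Rle_trans. apply Rle_Rpower_l. left; apply Rinv_0_lt_compat; auto. split; [exact Hpos|exact H].
  rewrite <- Rpower_mult_distr by (lra || (apply pow_lt; lra)).
  rewrite <- (Rpower_pow k b') by lra. rewrite Rpower_mult, Rinv_r, Rpower_1 by lra.
  assert (Hexp : Rpower A0 (/ INR k) <= b'' / b').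
  { unfold Rpower. rewrite <- (exp_ln (b'' / b')) by (apply Rdiv_lt_0_compat; lra).
    apply exp_le_mono.
    assert (HK : ln A0 / ln (b'' / b') <= INR k) by (apply le_INR in Hk2; lra).
    apply (Rmult_le_reg_l (INR k)); auto. rewrite <- Rmult_assoc, Rinv_r, Rmult_1_l by lra.
    apply (Rmult_le_compat_r (ln (b'' / b'))) in HK; [|lra]. unfold Rdiv in HK.
    rewrite Rmult_assoc, Rinv_l, Rmult_1_r in HK by lra. lra. }
  apply Rle_trans with (b'' / b' * b'). apply Rmult_le_compat_r; lra. right; field; lra.
Qed.

Lemma sq_to_le x y : 0 <= y -> x ^ 2 <= y ^ 2 -> x <= y.
Proof. intros Hy H. destruct (Rle_dec x y); auto. nra. Qed.

Lemma bound_at (fk : nat -> C) (p : nat -> C) (al : C) (b b' r R1 R2 : R) (m lam n k : nat) (A : list C) (Sq : nat -> C) :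
  good fk -> 0 < b -> b <= b' -> 0 <= r -> 0 < R1 -> R1 <= R2 -> R2 < 1 -> r * R1 < R2 ^ 2 -> b * R1 <= 1 / 2 ->
  let q := (R1 + r) / (R2 ^ 2 - r * R1) * R2 in
  0 <= q <= 1 ->
  / (b * R2) <= (b' / b) ^ m -> R2 / R1 <= 2 ^ m -> 2 * q ^ lam <= 1 / 4 -> 2 * q ^ lam <= b' * R1 ->
  (m * n <= k)%nat -> (1 <= k)%nat -> (n <= k)%nat ->
  Cmod al <= b -> good Sq -> cg fk al p n = P1 A Sq -> (forall a, In a A -> Cmod a <= r) ->
  (lam * k <= length A)%nat ->
  Cmod (fk k) <= (sqrt (Qn R2 fk) + sqrt (12 * ((1 + b) ^ 2 * Qn R2 fk)) / (1 - b * R1)) * b' ^ k.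
Proof.
  intros Hf Hb Hbb' Hr HR1 H12 HR2 HrR HbR1 q Hq Hm1 Hm2 Hl1 Hl2 Hmn Hk1 Hnk Hal HSq HE HA HL.
  set (F := sqrt (Qn R2 fk)). set (C0 := (1 + b) ^ 2 * Qn R2 fk). set (G := sqrt (12 * C0)).
  assert (HQ : 0 <= Qn R2 fk) by (apply Qn_nonneg; auto; lra).
  assert (HC0 : 0 <= C0) by (unfold C0; apply Rmult_le_pos; auto; apply pow2_ge_0).
  set (T := (R2 / R1) ^ n * q ^ length A).
  assert (HRR : 1 <= R2 / R1) by (apply (Rmult_le_reg_r R1); [lra|]; unfold Rdiv; rewrite Rmult_assoc, Rinv_l; lra).
  assert (HT0 : 0 <= T) by (unfold T; apply Rmult_le_pos; apply pow_le; lra).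
  assert (HTk : T <= (2 * q ^ lam) ^ k).
  { unfold T. rewrite Rpow_mult_distr, <- pow_mult.
    apply Rmult_le_compat. apply pow_le; lra. apply pow_le; lra.
    - apply Rle_trans with ((2 ^ m) ^ n). apply pow_incr; lra. rewrite <- pow_mult. apply Rle_pow. lra. lia.
    - apply pow_le_1_exp; auto. }
  assert (Hq0 : 0 <= q ^ lam) by (apply pow_le; lra).
  assert (ET : ((R2 / R1) ^ 2) ^ n * (q ^ 2) ^ length A = T ^ 2).
  { unfold T. rewrite <- !pow_mult, Rpow_mult_distr, <- !pow_mult. rewrite (Nat.mul_comm 2 n), (Nat.mul_comm 2 (length A)). reflexivity. }
  assert (HTsmall : 4 * ((R2 / R1) ^ 2) ^ n * (q ^ 2) ^ length A <= 1 / 2).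
  { rewrite Rmult_assoc, ET.
    assert (T <= 1 / 4).
    { eapply Rle_trans. apply HTk. destruct k. lia. simpl.
      assert ((2 * q ^ lam) ^ k <= 1) by (rewrite <- (pow1 k); apply pow_incr; lra).
      pose proof (pow_le (2 * q ^ lam) k ltac:(lra)). nra. }
    nra. }
  pose proof (estimate fk p n al b r R1 R2 A Sq Hf Hr HR1 H12 HR2 HrR Hal HSq HE HA HTsmall) as Hest.
  fold q in Hest. fold C0 in Hest.
  assert (HG : G ^ 2 = 12 * C0) by (unfold G; rewrite pow2_sqrt; lra).
  assert (HE2 : forall j, (n <= j)%nat -> Cmod (fk (S j) - al * fk j) * R1 ^ S j <= G * T).
  { intros j Hj. apply sq_to_le. apply Rmult_le_pos; auto. apply sqrt_pos.
    eapply Rle_trans. apply Hest; auto. right.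
    replace ((G * T) ^ 2) with (G ^ 2 * T ^ 2) by ring. rewrite HG, <- ET. ring. }
  assert (HGT : 0 <= G * T) by (apply Rmult_le_pos; auto; apply sqrt_pos).
  pose proof (recur fk al b R1 (G * T) n ltac:(lra) HR1 ltac:(lra) Hal HGT HE2 (k - n)) as Hrec.
  replace (n + (k - n))%nat with k in Hrec by lia.
  assert (Hfn : Cmod (fk n) * R2 ^ n <= F).
  { apply sq_to_le. apply sqrt_pos. unfold F. rewrite pow2_sqrt by auto. apply (sq_le_Qn R2 fk n); auto; lra. }
  assert (HR2n : 0 < R2 ^ n) by (apply pow_lt; lra).
  assert (Hb'b : 1 <= b' / b) by (apply (Rmult_le_reg_r b); [lra|]; unfold Rdiv; rewrite Rmult_assoc, Rinv_l; lra).
  assert (H1 : b ^ (k - n) * Cmod (fk n) <= F * b' ^ k).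
  { assert (Hbn : 0 < b ^ n) by (apply pow_lt; lra).
    assert (E : b ^ (k - n) = b ^ k * / (b * R2) ^ n * R2 ^ n).
    { rewrite Rpow_mult_distr. replace k with (n + (k - n))%nat at 2 by lia. rewrite pow_add.
      field. split; apply pow_nonzero; lra. }
    assert (Hk : b ^ k * / (b * R2) ^ n <= b' ^ k).
    { rewrite <- pow_inv. apply Rle_trans with (b ^ k * ((b' / b) ^ m) ^ n).
      apply Rmult_le_compat_l. apply pow_le; lra. apply pow_incr. split; auto. left; apply Rinv_0_lt_compat. nra.
      rewrite <- pow_mult. apply Rle_trans with (b ^ k * (b' / b) ^ k).
      apply Rmult_le_compat_l. apply pow_le; lra. apply Rle_pow; auto.
      right. rewrite <- Rpow_mult_distr. f_equal. field. lra. }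
    rewrite E. pose proof (Cmod_ge_0 (fk n)).
    replace (b ^ k * / (b * R2) ^ n * R2 ^ n * Cmod (fk n)) with ((b ^ k * / (b * R2) ^ n) * (Cmod (fk n) * R2 ^ n)) by ring.
    rewrite Rmult_comm. apply Rmult_le_compat; auto. apply Rmult_le_pos; auto. lra.
    apply Rmult_le_pos. apply pow_le; lra. left; apply Rinv_0_lt_compat, pow_lt; nra. }
  assert (H2 : G * T / R1 ^ k / (1 - b * R1) <= G / (1 - b * R1) * b' ^ k).
  { assert (HR1k : 0 < R1 ^ k) by (apply pow_lt; lra).
    assert (T / R1 ^ k <= b' ^ k).
    { apply (Rmult_le_reg_r (R1 ^ k)); auto. unfold Rdiv. rewrite Rmult_assoc, Rinv_l, Rmult_1_r by lra.
      rewrite <- Rpow_mult_distr. eapply Rle_trans. apply HTk. apply pow_incr. lra. }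
    assert (HGp : 0 <= G) by apply sqrt_pos.
    replace (G * T / R1 ^ k / (1 - b * R1)) with (G / (1 - b * R1) * (T / R1 ^ k)) by (field; lra).
    apply Rmult_le_compat_l; auto. apply Rdiv_le_0_compat; lra. }
  lra.
Qed.

Theorem lemma3p3
  (f : C -> C) (fk : nat -> C) (r : R)
  (N : nat -> Z) (P : nat -> nat -> C) (alpha : nat -> option C) :
  holo_disk f ->
  (forall z : C, Cmod z < 1 -> is_series (fun k => Cmult (fk k) (pow_n (K:=C_Ring) z k)) (f z)) ->
  0 < r -> r < 1 ->
  (forall n : nat, (N n < N (S n))%Z) ->
  is_lim_seq (fun n => IZR (N n) / INR n) p_infty ->
  (forall n : nat,
     at_least_zeros
       (fun z => Cminus (Cmult (Q_eval (alpha n) z) (f z)) (poly_eval (P n) n z))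
       r (N n)) ->
  Rbar_le (inv_ext (conv_radius fk)) (LimSupRbar (fun n => abs_alpha (alpha n))).
Proof.
  intros Hf Hser Hr0 Hr1 HNinc HNlim Hzeros.
  pose proof (good_of_series fk f Hser) as Hg.
  assert (HL0 : Rbar_le 0 (LimSup_seq (root_abs fk))).
  { rewrite <- (LimSup_seq_const 0). apply LimSup_le. exists O. intros k _.
    unfold root_abs. destruct (Req_EM_T _ 0). lra. unfold Rpower. left; apply exp_pos. }
  assert (Hinv : inv_ext (conv_radius fk) = LimSup_seq (root_abs fk)).
  { unfold conv_radius. destruct (LimSup_seq (root_abs fk)) as [l| |] eqn:EL; simpl.
    - destruct (Req_EM_T l 0) as [->|Hl]; simpl. reflexivity.
      destruct (Req_EM_T (/ l) 0) as [Hl'|Hl']. exfalso; apply (Rinv_neq_0_compat l Hl Hl').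
      rewrite Rinv_inv. reflexivity.
    - destruct (Req_EM_T 0 0); [reflexivity| congruence].
    - simpl in HL0. contradiction. }
  rewrite Hinv. clear Hinv.
  remember (LimSup_seq (root_abs fk)) as L eqn:EL.
  set (u := fun n => abs_alpha (alpha n)).
  set (E := fun y => exists N0 : nat, y = Rbar_lub (fun x => exists n, (N0 <= n)%nat /\ x = u n)).
  change (Rbar_le L (Rbar_glb E)).
  assert (Hglb := proj2_sig (Rbar_ex_glb E)). fold (Rbar_glb E) in Hglb.
  remember (Rbar_glb E) as aa eqn:Eaa.
  assert (Hu0 : forall n, Rbar_le 0 (u n)).
  { intros n. unfold u, abs_alpha. destruct (alpha n); simpl; auto. apply Cmod_ge_0. }
  assert (Haa0 : Rbar_le 0 aa).
  { apply (proj2 Hglb). intros y [N0 ->].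
    assert (Hub := proj1 (proj2_sig (Rbar_ex_lub (fun x => exists n, (N0 <= n)%nat /\ x = u n)))).
    eapply Rbar_le_trans. apply (Hu0 N0). apply Hub. exists N0. split; auto. }
  destruct (Classical_Prop.classic (Rbar_le L aa)) as [H|Hn]; auto. exfalso.
  apply Rbar_not_le_lt in Hn.
  destruct aa as [a0| |].
  2: { destruct L; simpl in Hn; contradiction. }
  2: { simpl in Haa0; contradiction. }
  simpl in Haa0.
  assert (Hchoose : exists b b' b'', 0 < b /\ a0 < b /\ b < b' /\ b' < b'' /\ Rbar_lt b'' L).
  { destruct L as [l| |]; simpl in Hn.
    - exists (a0 + (l - a0) / 4), (a0 + (l - a0) / 2), (a0 + 3 * (l - a0) / 4). simpl. repeat split; lra.
    - exists (a0 + 1), (a0 + 2), (a0 + 3). simpl. repeat split; lra.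
    - contradiction. }
  destruct Hchoose as [b [b' [b'' [Hb [Hab [Hbb' [Hb'b'' HL]]]]]]].
  assert (HN0 : exists N0, forall n, (N0 <= n)%nat -> exists al, alpha n = Some al /\ Cmod al < b).
  { destruct (Classical_Prop.classic (exists y, E y /\ Rbar_lt y b)) as [[y [[N0 ->] Hy]]|Hno].
    - exists N0. intros n Hn0.
      pose proof (proj1 (proj2_sig (Rbar_ex_lub (fun x => exists n, (N0 <= n)%nat /\ x = u n))) (u n) (ex_intro _ n (conj Hn0 eq_refl))) as Hun.
      pose proof (Rbar_le_lt_trans _ _ _ Hun Hy) as Hlt.
      unfold u, abs_alpha in Hlt. destruct (alpha n) as [al|]; simpl in Hlt. exists al; auto. contradiction.
    - assert (Hlb : Rbar_le b (Finite a0)).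
      { apply (proj2 Hglb). intros y Ey. apply Rbar_not_lt_le. intros Hlt. apply Hno. exists y; auto. }
      simpl in Hlb. lra. }
  destruct HN0 as [N0 HN0].
  set (R2 := (1 + r) / 2).
  set (R1 := Rmin (R2 * (R2 - r) / (2 * (R2 + r))) (1 / (2 * b))).
  assert (HR2 : r < R2 < 1) by (unfold R2; lra).
  assert (HR1pos : 0 < R1).
  { unfold R1. apply Rmin_glb_lt. apply Rdiv_lt_0_compat; nra. apply Rdiv_lt_0_compat; lra. }
  assert (HR1a : R1 <= R2 * (R2 - r) / (2 * (R2 + r))) by apply Rmin_l.
  assert (HR1b : R1 <= 1 / (2 * b)) by apply Rmin_r.
  assert (Hkey : R1 * (2 * (R2 + r)) <= R2 * (R2 - r)).
  { replace (R2 * (R2 - r)) with (R2 * (R2 - r) / (2 * (R2 + r)) * (2 * (R2 + r))) by (field; lra).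
    apply Rmult_le_compat_r; lra. }
  assert (HbR1 : b * R1 <= 1 / 2).
  { replace (1 / 2) with (b * (1 / (2 * b))) by (field; lra). apply Rmult_le_compat_l; lra. }
  assert (H12 : R1 <= R2) by nra.
  assert (HrR : r * R1 < R2 ^ 2) by nra.
  set (q := (R1 + r) / (R2 ^ 2 - r * R1) * R2).
  assert (Hq : 0 <= q < 1).
  { unfold q. assert (Hd : 0 < R2 ^ 2 - r * R1) by lra.
    assert (Hnum : (R1 + r) * R2 < R2 ^ 2 - r * R1) by nra.
    split. apply Rmult_le_pos. apply Rdiv_le_0_compat; lra. lra.
    replace ((R1 + r) / (R2 ^ 2 - r * R1) * R2) with ((R1 + r) * R2 / (R2 ^ 2 - r * R1)) by (field; lra).
    apply (Rmult_lt_reg_r (R2 ^ 2 - r * R1)); auto. unfold Rdiv. rewrite Rmult_assoc, Rinv_l; lra. }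
  destruct (pow_big (b' / b) (/ (b * R2))) as [m1 [Hm1 Hm1']].
  { apply (Rmult_lt_reg_r b); [lra|]. unfold Rdiv. rewrite Rmult_assoc, Rinv_l; lra. }
  destruct (pow_big 2 (R2 / R1)) as [m2 [Hm2 Hm2']]. lra.
  set (m := Nat.max m1 m2).
  assert (Hm : (1 <= m)%nat) by lia.
  assert (Hmb : / (b * R2) <= (b' / b) ^ m).
  { eapply Rle_trans. apply Hm1'. apply Rle_pow. apply (Rmult_le_reg_r b); [lra|]. unfold Rdiv.
    rewrite Rmult_assoc, Rinv_l; lra. lia. }
  assert (Hm2b : R2 / R1 <= 2 ^ m) by (eapply Rle_trans; [apply Hm2'|apply Rle_pow; [lra|lia]]).
  destruct (pow_small q (Rmin (1 / 8) (b' * R1 / 2))) as [lam Hlam]. auto.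
  { apply Rmin_glb_lt. lra. apply Rdiv_lt_0_compat; nra. }
  assert (Hl1 : 2 * q ^ lam <= 1 / 4) by (pose proof (Rmin_l (1 / 8) (b' * R1 / 2)); lra).
  assert (Hl2 : 2 * q ^ lam <= b' * R1) by (pose proof (Rmin_r (1 / 8) (b' * R1 / 2)); lra).
  destruct (proj2 (is_lim_seq_spec _ _) HNlim (INR (2 * m * lam))) as [N1 HN1].
  set (M0 := Nat.max N0 (Nat.max N1 1)).
  set (A1 := sqrt (Qn R2 fk) + sqrt (12 * ((1 + b) ^ 2 * Qn R2 fk)) / (1 - b * R1)).
  assert (Hmain : forall k, (m * M0 <= k)%nat -> Cmod (fk k) <= Rmax 1 A1 * b' ^ k).
  { intros k Hk.
    set (n := (k / m)%nat).
    assert (Hm0 : m <> O) by lia.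
    assert (Hmn : (m * n <= k)%nat) by (apply Nat.Div0.mul_div_le).
    assert (Hmn' : (k < m * S n)%nat) by (apply Nat.mul_succ_div_gt; auto).
    assert (HnM : (M0 <= n)%nat).
    { unfold n. rewrite <- (Nat.div_mul M0 m Hm0). apply Nat.Div0.div_le_mono. lia. }
    assert (Hn1 : (1 <= n)%nat) by lia.
    assert (Hk1 : (1 <= k)%nat) by nia.
    assert (Hnk : (n <= k)%nat) by nia.
    destruct (HN0 n ltac:(lia)) as [al [Hal Hal']].
    pose proof (Hzeros n) as Hz. rewrite Hal in Hz.
    destruct (factor_zeros fk f al (P n) n r (N n) Hser Hr1 Hz) as [A [Sq [HSq [HE [HNA HA]]]]].
    assert (HLk : (lam * k <= length A)%nat).
    { specialize (HN1 n ltac:(lia)).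
      assert (Hnpos : 0 < INR n) by (apply lt_0_INR; lia).
      assert (H2 : INR (2 * m * lam) * INR n < IZR (N n)).
      { apply (Rmult_lt_compat_r (INR n)) in HN1; auto. unfold Rdiv in HN1.
        rewrite Rmult_assoc, Rinv_l, Rmult_1_r in HN1 by lra. exact HN1. }
      assert (H3 : IZR (N n) <= INR (length A)) by (rewrite INR_IZR_INZ; apply IZR_le; exact HNA).
      rewrite <- mult_INR in H2.
      assert (H4 : (2 * m * lam * n < length A)%nat) by (apply INR_lt; lra).
      assert (H5 : (k <= 2 * m * n)%nat) by nia.
      nia. }
    pose proof (bound_at fk (P n) al b b' r R1 R2 m lam n k A Sq Hg Hb ltac:(lra) ltac:(lra) HR1pos H12
      ltac:(lra) HrR HbR1 ltac:(fold q; lra) Hmb Hm2b Hl1 Hl2 Hmn Hk1 Hnk ltac:(lra) HSq HE HA HLk) as Hb1.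
    fold A1 in Hb1. eapply Rle_trans. apply Hb1. apply Rmult_le_compat_r. apply pow_le; lra. apply Rmax_r. }
  pose proof (limsup_bound fk (Rmax 1 A1) b' b'' (m * M0) ltac:(lra) (Rmax_l _ _) Hmain) as Hfin.
  rewrite <- EL in Hfin.
  exact (Rbar_lt_not_le _ _ HL Hfin).
Qed.
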